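(* Let $\lambda,\alpha_1,\alpha_2\in\mathbb{C}^*$ and consider the tensor product $\mathcal{W}$-module $\Omega(\lambda,\alpha_1)\otimes\Omega(\lambda,\alpha_2)$ (both factors being $\mathbb{C}[Y]$). Let $U=\mathrm{span}\{\sum_{t=0}^{j}\binom{j}{t}Y^{j-t}\otimes Y^t\mid j\in\mathbb{N}\}$. Then $U$ is a nonzero proper $\mathcal{W}$-submodule of $\Omega(\lambda,\alpha_1)\otimes\Omega(\lambda,\alpha_2)$; consequently $\Omega(\lambda,\alpha_1)\otimes\Omega(\lambda,\alpha_2)$ is a reducible $\mathcal{W}$-module.
   Context: The Witt algebra $\mathcal{W}$ is the complex Lie algebra with basis $\{L_m\mid m\in\mathbb{Z}\}$ and bracket $[L_m,L_n]=(n-m)L_{m+n}$. For $\lambda\in\mathbb{C}^*$ and $\alpha\in\mathbb{C}$, $\Omega(\lambda,\alpha)$ denotes the $\mathcal{W}$-module $\mathbb{C}[Y]$ with $L_m f(Y)=\lambda^m(Y+m\alpha)f(Y-m)$ for $m\in\mathbb{Z}$. The tensor product has action $L_m(v\otimes w)=L_mv\otimes w+v\otimes L_mw$. $\mathbb{N}$ denotes non-negative integers. *)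

(* Defs.v *)
(* The complex field is modelled as R[i] (mathcomp-real-closed
   `complex`) for an arbitrary R : realType (so R[i] is the field of complex numbers). *)
From HB Require Import structures.
From mathcomp Require Import all_boot all_order all_algebra.
From mathcomp Require Import reals complex.
Set Implicit Arguments. Unset Strict Implicit. Unset Printing Implicit Defensive.
Import Order.TTheory GRing.Theory Num.Theory.
Local Open Scope ring_scope.

Definition omegaGen (K : comNzRingType) (c a : K) (m : int) (f : {poly K}) : {poly K} :=
  c *: (('X + (m%:~R * a)%:P) * (f \Po ('X - (m%:~R)%:P))).

Definition OmegaAct (R : realType) (lam al : R[i]) (m : int) (f : {poly R[i]}) : {poly R[i]} :=
  omegaGen (lam ^ m) al m f.

(* Model of the tensor product C[Y] (x) C[Y]:  {poly {poly C}}, where the inner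
   (coefficient) polynomials carry the first tensor factor and the outer variable
   carries the second one. *)
Definition tens (R : realType) (v w : {poly R[i]}) : {poly {poly R[i]}} :=
  map_poly (fun c => c *: v) w.

(* Action of L_m on Omega(lam,a1) (x) Omega(lam,a2): L_m acting on the first
   factor (coefficientwise) plus L_m acting on the second factor, so that
   L_m (v (x) w) = L_m v (x) w + v (x) L_m w. *)
Definition tensAct (R : realType) (lam a1 a2 : R[i]) (m : int)
    (h : {poly {poly R[i]}}) : {poly {poly R[i]}} :=
  map_poly (OmegaAct lam a1 m) h + omegaGen ((lam ^ m)%:P) (a2%:P) m h.

Definition ugen (R : realType) (j : nat) : {poly {poly R[i]}} :=
  \sum_(t < j.+1) ('C(j, t))%:R *: tens ('X^(j - t)) ('X^t).

Definition inU (R : realType) (h : {poly {poly R[i]}}) : Prop :=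
  exists (n : nat) (c : nat -> R[i]), h = \sum_(j < n) (c j)%:P *: ugen R j.

Definition is_submodule (R : realType) (lam a1 a2 : R[i])
    (S : {poly {poly R[i]}} -> Prop) : Prop :=
  [/\ S 0, (forall x y, S x -> S y -> S (x + y)),
      (forall (c : R[i]) x, S x -> S ((c%:P) *: x)) &
      (forall (m : int) x, S x -> S (tensAct lam a1 a2 m x))].

Definition tens_reducible (R : realType) (lam a1 a2 : R[i]) : Prop :=
  exists S : {poly {poly R[i]}} -> Prop,
    [/\ is_submodule lam a1 a2 S, (exists x, S x /\ x != 0) & (exists x, ~ S x)].

(* Main.v *)
Require Import Defs.
From HB Require Import structures.
From mathcomp Require Import all_boot all_order all_algebra.
From mathcomp Require Import reals complex.
From mathcomp Require Import ring.
Import Order.TTheory GRing.Theory Num.Theory.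
Local Open Scope ring_scope.

Local Notation gg := (polyC \o polyC).

Definition ss (R : realType) : {poly {poly R[i]}} := ('X)%:P + 'X.
Definition Phi (R : realType) (p : {poly R[i]}) : {poly {poly R[i]}} :=
  (map_poly gg p).[ss R].

Arguments Phi {R}.
Lemma Phi_add (R : realType) (p q : {poly R[i]}) : Phi (p + q) = Phi p + Phi q.
Proof. by rewrite /Phi rmorphD hornerD. Qed.
Lemma Phi_mul (R : realType) (p q : {poly R[i]}) : Phi (p * q) = Phi p * Phi q.
Proof. by rewrite /Phi rmorphM hornerM. Qed.
Lemma Phi_C (R : realType) (c : R[i]) : Phi c%:P = gg c.
Proof. by rewrite /Phi map_polyC hornerC. Qed.
Lemma Phi_X (R : realType) : Phi 'X = ss R.
Proof. by rewrite /Phi map_polyX hornerX. Qed.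
Lemma Phi_exp (R : realType) (p : {poly R[i]}) n : Phi (p ^+ n) = Phi p ^+ n.
Proof.
elim: n => [|n IH]; first by rewrite !expr0 -polyC1 Phi_C /= !polyC1.
by rewrite !exprS Phi_mul IH.
Qed.

Lemma tens_eq (R : realType) (v w : {poly R[i]}) : tens v w = v%:P * map_poly polyC w.
Proof.
apply/polyP=> i; rewrite /tens coefCM coef_map_id0 ?scale0r // coef_map /=.
by rewrite -mul_polyC mulrC.
Qed.

Lemma ugen_ss (R : realType) j : ugen R j = ss R ^+ j.
Proof.
rewrite /ugen /ss exprDn; apply: eq_bigr => t _.
by rewrite tens_eq map_polyXn scaler_nat rmorphXn.
Qed.

Lemma inU_iff (R : realType) (h : {poly {poly R[i]}}) :
  inU h <-> exists p, h = Phi p.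
Proof.
split.
- case=> n [c ->].
  elim/big_ind: _ => [|x1 y1 [p ->] [q ->]|j _].
  + by exists 0; rewrite -polyC0 Phi_C /= !polyC0.
  + by exists (p + q); rewrite Phi_add.
  + exists ((c j)%:P * 'X ^+ j); rewrite Phi_mul Phi_exp Phi_C Phi_X ugen_ss.
    by rewrite mul_polyC.
- case=> p ->; exists (size p), (fun j => p`_j).
  rewrite /Phi (horner_coef_wide _ (eq_leq (size_map_poly _ _))).
  apply: eq_bigr => j _; rewrite coef_map ugen_ss /= mul_polyC //.
Qed.

Lemma OmegaAct0 (R : realType) (lam a : R[i]) m : OmegaAct lam a m 0 = 0.
Proof. by rewrite /OmegaAct /omegaGen comp_poly0 mulr0 scaler0. Qed.

Lemma tensAct_add (R : realType) (lam a1 a2 : R[i]) m x y :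
  tensAct lam a1 a2 m (x + y) = tensAct lam a1 a2 m x + tensAct lam a1 a2 m y.
Proof.
have addO f g : OmegaAct lam a1 m (f + g) = OmegaAct lam a1 m f + OmegaAct lam a1 m g.
  by rewrite /OmegaAct /omegaGen comp_polyD mulrDr scalerDr.
rewrite /tensAct.
have -> : map_poly (OmegaAct lam a1 m) (x + y) =
   map_poly (OmegaAct lam a1 m) x + map_poly (OmegaAct lam a1 m) y.
  by apply/polyP=> i; rewrite coefD !coef_map_id0 ?OmegaAct0 // coefD addO.
rewrite /omegaGen comp_polyD mulrDr scalerDr.
by rewrite addrACA.
Qed.

Lemma tensAct0 (R : realType) (lam a1 a2 : R[i]) m : tensAct lam a1 a2 m 0 = 0.
Proof.
by rewrite /tensAct /omegaGen map_poly0 comp_poly0 mulr0 scaler0 addr0.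
Qed.

Lemma tensAct_gen (R : realType) (lam a1 a2 : R[i]) m (k : R[i]) j :
  tensAct lam a1 a2 m (gg k * ss R ^+ j) =
  Phi ((k * lam ^ m)%:P * ('X + (m%:~R * (a1 + a2))%:P) * ('X - (m%:~R)%:P) ^+ j).
Proof.
rewrite /tensAct.
have -> : map_poly (OmegaAct lam a1 m) (gg k * ss R ^+ j) =
   (lam ^ m *: ('X + (m%:~R * a1)%:P))%:P *
     map_poly (comp_poly ('X - (m%:~R)%:P)) (gg k * ss R ^+ j).
  apply/polyP=> i; rewrite coefCM !coef_map_id0 ?OmegaAct0 ?comp_poly0 //.
  by rewrite /OmegaAct /omegaGen scalerAl.
rewrite /omegaGen !rmorphM /=.
rewrite (rmorphXn (map_poly (comp_poly _))) (rmorphXn (comp_poly _)).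
rewrite /ss rmorphD /= !map_polyC map_polyX /=.
rewrite !comp_polyD !comp_polyC comp_polyX /=.
rewrite !Phi_mul !Phi_exp !Phi_add Phi_X !Phi_mul !Phi_C /= /ss.
rewrite !comp_polyX -polyCN Phi_C /=.
rewrite !(rmorphD, rmorphM, rmorphN, rmorph_int) /=.
rewrite -!mul_polyC !rmorphM !rmorphD /= !rmorphM rmorph_int /=.
move: (('X : {poly R[i]})%:P) ((lam ^ m)%:P)%:P ((k%:P)%:P) ((a1%:P)%:P) ((a2%:P)%:P)
  (m%:~R : {poly {poly R[i]}}) ('X : {poly {poly R[i]}}) => Y L K A1 A2 M X.
have -> : Y - M + X = Y + X - M by rewrite addrAC.
rewrite (addrA Y X (- M)).
move: ((Y + X - M) ^+ j) => Z.
ring.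
Qed.

Lemma Phi_at0 (R : realType) (p : {poly R[i]}) : (Phi p).[0] = p.
Proof.
rewrite -[_.[0]]/(horner_eval 0 (Phi p)) /Phi -horner_map -map_poly_comp.
rewrite /=.
have -> : horner_eval (0 : {poly R[i]}) (ss R) = 'X.
  by rewrite /horner_eval /ss /= !hornerE.
rewrite (eq_map_poly (g := polyC)); first exact: comp_polyXr.
by move=> c; rewrite /= /horner_eval /= hornerC.
Qed.

Lemma inU_sub (R : realType) (lam a1 a2 : R[i]) : is_submodule lam a1 a2 (@inU R).
Proof.
split.
- by apply/inU_iff; exists 0; rewrite /Phi map_poly0 horner0.
- move=> x y /inU_iff [p ->] /inU_iff [q ->]; apply/inU_iff.
  by exists (p + q); rewrite Phi_add.
- move=> c x /inU_iff [p ->]; apply/inU_iff.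
  by exists (c%:P * p); rewrite Phi_mul Phi_C mul_polyC.
- move=> m x [n [c ->]]; apply/inU_iff.
  rewrite (big_morph _ (tensAct_add R lam a1 a2 m) (tensAct0 R lam a1 a2 m)).
  elim/big_ind: _ => [|x1 y1 [p ->] [q ->]|j _].
  + by exists 0; rewrite /Phi map_poly0 horner0.
  + by exists (p + q); rewrite Phi_add.
  + rewrite ugen_ss -mul_polyC.
    by eexists; exact: (tensAct_gen R lam a1 a2 m (c j) j).
Qed.

Theorem mainTheorem14 (R : realType) (lam a1 a2 : R[i]) :
  lam != 0 -> a1 != 0 -> a2 != 0 ->
  [/\ is_submodule lam a1 a2 (@inU R),
      (exists x, @inU R x /\ x != 0),
      (exists x, ~ @inU R x) &
      tens_reducible lam a1 a2].
Proof.
move=> _ _ _.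
have nz : exists x, @inU R x /\ x != 0.
  exists 1; split; last exact: oner_neq0.
  by apply/inU_iff; exists 1; rewrite -polyC1 Phi_C /= !polyC1.
have np : exists x, ~ @inU R x.
  exists 'X => /inU_iff [p E].
  have : p = 0 by rewrite -(Phi_at0 R p) -E hornerX.
  by move=> p0; move: E; rewrite p0 /Phi map_poly0 horner0 => /eqP; rewrite polyX_eq0.
split=> //; first exact: inU_sub.
by exists (@inU R); split=> //; exact: inU_sub.
Qed.
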